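(* Fix an integer base $b\ge 2$ and $f_*:\{0,\dots,b-1\}\to\mathbb{Z}^{\ge 0}$ with $f_*(0)=0$, $f_*(1)=1$, $\gcd(b,f_*(b-1))=1$, and suppose there is a digit $0\le m_*\le b-1$ with $\gcd(f(m_* )-m_*,f(b-1))=1$, where $f$ is the digit map $f\left(\sum_i a_ib^i\right)=\sum_i f_*(a_i)$ (base-$b$ representation). Let $u$ be a positive integer with $f^r(u)=u$ for some $r\ge 1$. Let $h$ be a $u$-integer. Then for every integer $a$ there exists a $u$-integer $l$ such that $l\equiv a \pmod{f(b-1)}$ and such that $l$ and $h$ are concurrently $u$-integers.
   Context: $f^r$ is the $r$-fold iterate of $f$. A positive integer $n$ is a $u$-integer if $f^r(n)=u$ for some $r\ge1$. Two positive integers $m,n$ are concurrently $u$-integers if there is some $r\ge 1$ with $f^r(m)=f^r(n)=u$. *)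

(* Defs.v *)
From mathcomp Require Import all_boot all_order all_algebra.
Set Implicit Arguments. Unset Strict Implicit. Unset Printing Implicit Defensive.

(* Implemented by peeling off the last digit;
   the fuel argument k (initialised to n) suffices since n %/ b < n for b >= 2
   and n > 0.  digitmap b fs 0 = 0. *)
Fixpoint digitmap_rec (b : nat) (fs : nat -> nat) (k n : nat) : nat :=
  match k with
  | 0 => 0
  | k'.+1 => if n == 0 then 0 else fs (n %% b) + digitmap_rec b fs k' (n %/ b)
  end.

Definition digitmap (b : nat) (fs : nat -> nat) (n : nat) : nat :=
  digitmap_rec b fs n n.

Definition is_u_integer (f : nat -> nat) (u n : nat) : Prop :=
  0 < n /\ exists r, 1 <= r /\ iter r f n = u.

Definition concurrently_u (f : nat -> nat) (u m n : nat) : Prop :=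
  0 < m /\ 0 < n /\ exists r, 1 <= r /\ iter r f m = u /\ iter r f n = u.

(* Main.v *)
Require Import Defs.
From mathcomp Require Import all_boot all_order all_algebra.
From mathcomp Require Import cyclic zify ring.
Import GRing.Theory Num.Theory.

Lemma rec_fuel b fs : 1 < b -> forall k1 k2 n, n <= k1 -> n <= k2 ->
  digitmap_rec b fs k1 n = digitmap_rec b fs k2 n.
Proof.
move=> hb; elim=> [|k1 IH] [|k2] n //=.
- by rewrite leqn0 => /eqP -> _.
- by rewrite leqn0 => _ /eqP ->.
- move=> h1 h2; case: eqP => // /eqP n0.
  have lt : n %/ b < n by rewrite ltn_Pdiv // lt0n.
  by congr (_ + _); apply: IH; lia.
Qed.

Lemma dm_step b fs d n : 1 < b -> fs 0 = 0 -> d < b ->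
  digitmap b fs (d + b * n) = fs d + digitmap b fs n.
Proof.
move=> hb f0 hd.
case E: (d + b * n) => [|x].
  have d0 : d = 0 by lia.
  have n0 : n = 0 by nia.
  by rewrite d0 n0 f0.
rewrite /digitmap /= -E.
have -> : (d + b*n) %% b = d by rewrite addnC mulnC modnMDl modn_small.
have -> : (d + b*n) %/ b = n.
  by rewrite addnC mulnC divnMDl ?divn_small ?addn0 //; lia.
congr (_ + _); apply: rec_fuel => //; nia.
Qed.

Lemma dm_shift b fs q x : 1 < b -> fs 0 = 0 ->
  digitmap b fs (b ^ q * x) = digitmap b fs x.
Proof.
move=> hb f0; elim: q => [|q IH]; first by rewrite mul1n.
by rewrite expnS -mulnA -(add0n (b * _)) dm_step ?f0 ?IH //; lia.
Qed.

Definition P b q d n x := iter n (fun y => d + b ^ q * y) x.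

Lemma dm_P b fs q d n x : 1 < b -> fs 0 = 0 -> 0 < q -> d < b ->
  digitmap b fs (P b q d n x) = n * fs d + digitmap b fs x.
Proof.
move=> hb f0 hq hd; case: q hq => // q _; elim: n => [|n IH] //=.
by rewrite expnS -mulnA dm_step // dm_shift // IH mulSn addnA.
Qed.

Lemma mod_P b q d n x F : b ^ q = 1 %[mod F] ->
  P b q d n x = n * d + x %[mod F].
Proof.
move=> hq; elim: n => [|n IH] //=.
rewrite -modnDmr -modnMml hq modnMml mul1n modnDmr.
by rewrite -modnDmr IH modnDmr mulSn addnA.
Qed.

Lemma P_ge b q d n x : 0 < b -> x <= P b q d n x.
Proof.
move=> hb; elim: n => //= n IH; apply: (leq_trans IH).
have : 0 < b ^ q by rewrite expn_gt0 hb.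
move: (P b q d n x) => y h.
apply: leq_trans (leq_addl d _); by rewrite leq_pmull.
Qed.

Lemma iter0 (f : nat -> nat) n : f 0 = 0 -> iter n f 0 = 0.
Proof. by move=> h; elim: n => //= n ->. Qed.

Lemma alg (l a T k m D n1 F c1 c2 R uu vv e : int) :
  l = (c1 * F + R)%R -> (k * m + n1 = c2 * F + R)%R -> (n1 = T - k * D)%R ->
  (k = uu * (T - a) - e * F)%R -> (uu * (D - m) + vv * F = 1)%R ->
  (l - a = ((c1 - c2) + (T - a) * vv + e * (D - m)) * F)%R.
Proof.
move=> h1 h2 h3 h4 h5.
have hR : R = (k * m + n1 - c2 * F)%R by rewrite h2; ring.
rewrite h1 hR h3 h4; apply/eqP; rewrite -subr_eq0.
apply/eqP; transitivity ((T - a) * (1 - (uu * (D - m) + vv * F)))%R.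
  ring.
by rewrite h5 subrr mulr0.
Qed.

Theorem lemma2p3 (b : nat) (fs : nat -> nat) (mstar u h : nat) :
  2 <= b ->
  fs 0 = 0 -> fs 1 = 1 ->
  coprime b (fs b.-1) ->
  mstar <= b.-1 ->
  gcdz ((digitmap b fs mstar)%:Z - mstar%:Z) (digitmap b fs b.-1)%:Z = 1%Z ->
  0 < u -> (exists r, 1 <= r /\ iter r (digitmap b fs) u = u) ->
  is_u_integer (digitmap b fs) u h ->
  forall a : int, exists l : nat,
    is_u_integer (digitmap b fs) u l /\
    (l%:Z = a %[mod (digitmap b fs b.-1)%:Z])%Z /\
    concurrently_u (digitmap b fs) u l h.
Proof.
move=> hb f0 f1 hcop hm hgcd hu [p [hp hpu]] [hh [r0 [hr0 hr0u]]] a.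
set f := digitmap b fs in hgcd hpu hr0u *.
have fdig d : d < b -> f d = fs d.
  move=> hd; have := dm_step b fs d 0 hb f0 hd.
  by rewrite muln0 addn0 /= addn0.
have hf0 : f 0 = 0 by [].
set F := f b.-1 in hgcd *.
set D := f mstar in hgcd *.
have hFe : F = fs b.-1 by rewrite /F fdig //; lia.
have hDe : D = fs mstar by rewrite /D fdig //; lia.
have Fpos : 0 < F.
  rewrite lt0n; apply/eqP => F0; move: hcop; rewrite -hFe F0 /coprime gcdn0.
  move/eqP; lia.
set q := totient F.
have hq : 0 < q by rewrite totient_gt0.
have hbq : b ^ q = 1 %[mod F] by apply: Euler_exp_totient; rewrite hFe.
have fhpos : 0 < f h.
  rewrite lt0n; apply/eqP => e; move: hr0u.
  case: r0 hr0 => // r0 _; rewrite iterSr e iter0 //; lia.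
have [uu [vv huv]] := Bezoutz (D%:Z - mstar%:Z)%R F%:Z%R.
rewrite hgcd in huv.
set T := f h * b ^ (F * D).
set x := (uu * (T%:Z - a))%R.
set k := `|(x %% F%:Z%R)%Z|%N.
have hk : (k%:Z)%R = (x %% F%:Z%R)%Z by rewrite gez0_abs // modz_ge0 // eqz_nat -lt0n.
have kF : k <= F.
  have := intdiv.ltz_mod x (_ : F%:Z%R != 0%R); rewrite -hk eqz_nat -lt0n => /(_ Fpos).
  rewrite ltz_nat; lia.
have TkD : k * D < T.
  have h1 : F * D < b ^ (F * D) by apply: ltn_expl.
  rewrite /T; nia.
set n1 := T - k * D.
set l := P b q mstar k (P b q 1 n1 0).
have fl : f l = T.
  rewrite /f /l dm_P //; last by lia.
  rewrite dm_P // -/f hf0 f1 -hDe /n1; lia.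
have fT : f T = f (f h) by rewrite /T mulnC /f dm_shift.
have lpos : 0 < l.
  have n1pos : 0 < n1 by rewrite /n1; lia.
  have h0 : 0 < P b q 1 n1 0 by case: (n1) n1pos => // n _ /=; lia.
  apply: leq_trans h0 (P_ge b q mstar k _ _); lia.
have hiter s : iter s.+2 f l = iter s.+2 f h by rewrite !iterSr fl fT.
have hr : iter (p + r0) f h = u by rewrite iterD hr0u hpu.
have hl : iter (p + r0) f l = u.
  have [s es] : exists s, p + r0 = s.+2 by exists (p + r0 - 2); lia.
  by rewrite es hiter -es hr.
exists l; split; first by split => //; exists (p + r0); split => //; lia.
split; last first.
  by split => //; split => //; exists (p + r0); split => //; lia.
have hmod : l %% F = (k * mstar + n1) %% F.
  by rewrite /l mod_P // -modnDmr mod_P // modnDmr muln1 addn0.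
apply/eqP; rewrite eqz_mod_dvd; apply/dvdzP.
eexists; apply: (@alg _ _ (T%:Z)%R (k%:Z)%R (mstar%:Z)%R (D%:Z)%R (n1%:Z)%R (F%:Z)%R
   ((l %/ F)%:Z)%R (((k * mstar + n1) %/ F)%:Z)%R ((l %% F)%:Z)%R uu vv (x %/ F%:Z)%Z).
- by rewrite {1}(divn_eq l F) PoszD PoszM.
- by rewrite -PoszM -PoszD {1}(divn_eq (k * mstar + n1) F) hmod PoszD PoszM.
- by rewrite -PoszM subzn // ltnW.
- rewrite hk; set y := (x %/ _)%Z; set z := (x %% _)%Z.
  by rewrite -/x {1}(divz_eq x F%:Z%R) -/y -/z; ring.
- exact: huv.
Qed.
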